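(* Let $\mathcal{B}$ be a prime Banach algebra over $\mathbb{R}$ or $\mathbb{C}$, and let $\mathcal{H}_1,\mathcal{H}_2$ be non-empty open subsets of $\mathcal{B}$. Suppose $\mathcal{B}$ admits a continuous automorphism $f$ such that for every $(x,y)\in\mathcal{H}_1\times\mathcal{H}_2$ there exist positive integers $p=p(x,y)$, $q=q(x,y)$ with $$f(x^{p}\circ y^{q})-[x^{p},y^{q}]\in Z(\mathcal{B}).$$ Then $\mathcal{B}$ is commutative.
   Context: $Z(\mathcal{B})$ denotes the center of $\mathcal{B}$. For $x,y\in\mathcal{B}$, $x\circ y=xy+yx$ and $[x,y]=xy-yx$. $\mathcal{B}$ is prime if $x\mathcal{B}y=\{0\}$ implies $x=0$ or $y=0$. An automorphism of $\mathcal{B}$ is a bijective map $f:\mathcal{B}\to\mathcal{B}$ with $f(x+y)=f(x)+f(y)$ and $f(xy)=f(x)f(y)$ for all $x,y$. *)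

(* Defs.v *)
From HB Require Import structures.
From mathcomp Require Import all_boot all_order all_algebra.
From mathcomp Require Import all_classical all_reals all_analysis.
Set Implicit Arguments. Unset Strict Implicit. Unset Printing Implicit Defensive.
Import Order.TTheory GRing.Theory Num.Theory.
Import numFieldNormedType.Exports.
Local Open Scope ring_scope.
Local Open Scope classical_set_scope.

Definition banach_algebra_mul {R : realType} {B : completeNormedModType R}
  (mul : B -> B -> B) : Prop :=
  (forall x y z, mul x (mul y z) = mul (mul x y) z) /\
  (forall x y z, mul x (y + z) = mul x y + mul x z) /\
  (forall x y z, mul (x + y) z = mul x z + mul y z) /\
  (forall (a : R) x y, mul (a *: x) y = a *: mul x y) /\
  (forall (a : R) x y, mul x (a *: y) = a *: mul x y) /\
  (forall x y, `|mul x y| <= `|x| * `|y|).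

(* x^n for n >= 1 (x^1 = x, x^(n+1) = x * x^n); only used with n >= 1. *)
Definition apow {B : Type} (mul : B -> B -> B) (x : B) (n : nat) : B :=
  iter n.-1 (mul x) x.

Definition alg_center {B : Type} (mul : B -> B -> B) : set B :=
  [set z | forall x, mul z x = mul x z].

Definition jordan_prod {B : zmodType} (mul : B -> B -> B) (x y : B) : B :=
  mul x y + mul y x.
Definition alg_commutator {B : zmodType} (mul : B -> B -> B) (x y : B) : B :=
  mul x y - mul y x.

Definition prime_alg {B : zmodType} (mul : B -> B -> B) : Prop :=
  forall x y, (forall b, mul (mul x b) y = 0) -> x = 0 \/ y = 0.

Definition alg_automorphism {B : zmodType} (mul : B -> B -> B) (f : B -> B) : Prop :=
  [/\ bijective f,
      (forall x y, f (x + y) = f x + f y)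
    & (forall x y, f (mul x y) = mul (f x) (f y))].

(* Main.v *)
Require Import Defs.
From HB Require Import structures.
From mathcomp Require Import all_boot all_order all_algebra.
From mathcomp Require Import all_classical all_reals all_analysis.
Import Order.TTheory GRing.Theory Num.Theory.
Import numFieldNormedType.Exports.
Local Open Scope ring_scope.
Local Open Scope classical_set_scope.
Set Implicit Arguments. Unset Strict Implicit.
Section Alg.
Variables (R : realType) (B : completeNormedModType R) (mul : B -> B -> B).
Hypothesis HB : banach_algebra_mul mul.

Lemma mulA x y z : mul x (mul y z) = mul (mul x y) z.
Proof. by case: HB. Qed.
Lemma mulDr x y z : mul x (y + z) = mul x y + mul x z.
Proof. by case: HB => _ []. Qed.
Lemma mulDl x y z : mul (x + y) z = mul x z + mul y z.
Proof. by case: HB => _ [] _ []. Qed.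
Lemma mulZl (a : R) x y : mul (a *: x) y = a *: mul x y.
Proof. by case: HB => _ [] _ [] _ []. Qed.
Lemma mulZr (a : R) x y : mul x (a *: y) = a *: mul x y.
Proof. by case: HB => _ [] _ [] _ [] _ []. Qed.
Lemma mul_norm x y : `|mul x y| <= `|x| * `|y|.
Proof. by case: HB => _ [] _ [] _ [] _ []. Qed.

Lemma mul0r x : mul 0 x = 0.
Proof. by apply: (addrI (mul 0 x)); rewrite addr0 -mulDl addr0. Qed.
Lemma mulr0 x : mul x 0 = 0.
Proof. by apply: (addrI (mul x 0)); rewrite addr0 -mulDr addr0. Qed.
Lemma mulNr x y : mul (- x) y = - mul x y.
Proof. by apply/eqP; rewrite -addr_eq0 -mulDl addNr mul0r. Qed.
Lemma mulrN x y : mul x (- y) = - mul x y.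
Proof. by apply/eqP; rewrite -addr_eq0 -mulDr addNr mulr0. Qed.
Lemma mulBr x y z : mul x (y - z) = mul x y - mul x z.
Proof. by rewrite mulDr mulrN. Qed.
Lemma mulBl x y z : mul (x - y) z = mul x z - mul y z.
Proof. by rewrite mulDl mulNr. Qed.
Lemma mulr_sumr (I : Type) (r : seq I) (P : pred I) (F : I -> B) x :
  mul x (\sum_(i <- r | P i) F i) = \sum_(i <- r | P i) mul x (F i).
Proof. by apply: (big_morph (mul x) (mulDr x) (mulr0 x)). Qed.
Lemma mulr_suml (I : Type) (r : seq I) (P : pred I) (F : I -> B) x :
  mul (\sum_(i <- r | P i) F i) x = \sum_(i <- r | P i) mul (F i) x.
Proof. by apply: (big_morph (mul^~ x) (fun a b => mulDl a b x) (mul0r x)). Qed.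

End Alg.
Section Pow.
Variables (R : realType) (B : completeNormedModType R) (mul : B -> B -> B).
Hypothesis HB : banach_algebra_mul mul.
Local Notation "x ^^ n" := (apow mul x n) (at level 30).
Local Notation Z := (alg_center mul).

Lemma apowS x n : x ^^ n.+2 = mul x (x ^^ n.+1).
Proof. by []. Qed.
Lemma apow1 x : x ^^ 1 = x.
Proof. by []. Qed.
Lemma apowSr x n : x ^^ n.+2 = mul (x ^^ n.+1) x.
Proof.
elim: n => [//|n IH]; by rewrite [LHS]apowS [in LHS]IH (mulA HB).
Qed.
Lemma apowD x m n : (0 < m)%N -> (0 < n)%N -> x ^^ (m + n)%N = mul (x ^^ m) (x ^^ n).
Proof.
case: m => // m _; case: n => // n _.
elim: m => [|m IH]; first by rewrite add1n apowS.
by rewrite -[in RHS](mulA HB) -IH.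
Qed.
Lemma apowM x p q : (0 < p)%N -> (0 < q)%N -> (x ^^ q) ^^ p = x ^^ (q * p)%N.
Proof.
case: p => // p _ qgt0; elim: p => [|p IH]; first by rewrite muln1.
rewrite apowS IH -apowD //; last by rewrite muln_gt0 qgt0.
by rewrite [in RHS]mulnS.
Qed.

Lemma Z0 : Z 0.
Proof. by move=> x; rewrite (mul0r HB) (mulr0 HB). Qed.
Lemma ZD a b : Z a -> Z b -> Z (a + b).
Proof. by move=> za zb x; rewrite (mulDl HB) (mulDr HB) za zb. Qed.
Lemma ZN a : Z a -> Z (- a).
Proof. by move=> za x; rewrite (mulNr HB) (mulrN HB) za. Qed.
Lemma ZB a b : Z a -> Z b -> Z (a - b).
Proof. by move=> za zb; apply: ZD => //; apply: ZN. Qed.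
Lemma ZZ (c : R) a : Z a -> Z (c *: a).
Proof. by move=> za x; rewrite (mulZl HB) (mulZr HB) za. Qed.
Lemma Zmul a b : Z a -> Z b -> Z (mul a b).
Proof. by move=> za zb x; rewrite -(mulA HB) zb (mulA HB) za (mulA HB). Qed.
Lemma Zapow a n : Z a -> Z (a ^^ n).
Proof.
move=> za; case: n => [//|n]; elim: n => [//|n IH].
by rewrite apowS; apply: Zmul.
Qed.

End Pow.
Fixpoint pc {B : zmodType} (mul : B -> B -> B) (x z : B) (n j : nat) : B :=
  match n with
  | 0 => if j == 0%N then x else if j == 1%N then z else 0
  | n'.+1 => mul x (pc mul x z n' j) +
             (if j is j'.+1 then mul z (pc mul x z n' j') else 0)
  end.

Section Poly.
Variables (R : realType) (B : completeNormedModType R) (mul : B -> B -> B).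
Hypothesis HB : banach_algebra_mul mul.
Local Notation "x ^^ n" := (apow mul x n) (at level 30).
Local Notation Z := (alg_center mul).
Local Notation pc := (pc mul).

Lemma pc_big x z n j : (n.+1 < j)%N -> pc x z n j = 0.
Proof.
elim: n j => [|n IH] [|[|j]] //= hj.
rewrite IH ?(mulr0 HB) ?add0r //; first by rewrite (IH j.+1) ?(mulr0 HB).
by apply: ltn_trans hj.
Qed.

Lemma pc_top x z n : pc x z n n.+1 = z ^^ n.+1.
Proof.
elim: n => [//|n IH] /=.
by rewrite pc_big // (mulr0 HB) add0r IH.
Qed.

Lemma pc_0 x z n : pc x z n 0 = x ^^ n.+1.
Proof. by elim: n => [//|n IH] /=; rewrite IH addr0. Qed.

Lemma pcS x z n j : pc x z n.+1 j.+1 = mul x (pc x z n j.+1) + mul z (pc x z n j).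
Proof. by []. Qed.

Lemma pc_expand x z (t : R) n :
  (x + t *: z) ^^ n.+1 = \sum_(j < n.+2) t ^+ j *: pc x z n j.
Proof.
elim: n => [|n IH].
  by rewrite !big_ord_recr big_ord0 /= expr0 expr1 scale1r add0r.
rewrite apowS IH (mulDl HB) !(mulr_sumr HB).
transitivity (\sum_(j < n.+3) t ^+ j *: mul x (pc x z n j) +
  \sum_(j < n.+3) t ^+ j *: (if nat_of_ord j is j'.+1 then mul z (pc x z n j') else 0));
  last by rewrite -big_split; apply: eq_bigr => j _; rewrite scalerDr.
congr (_ + _).
  rewrite [in RHS]big_ord_recr /= pc_big // (mulr0 HB) scaler0 addr0.
  by apply: eq_bigr => j _; rewrite (mulZr HB).
rewrite [in RHS]big_ord_recl /= scaler0 add0r.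
apply: eq_bigr => j _; rewrite (mulZl HB) (mulZr HB) scalerA -exprS.
by rewrite /bump /=.
Qed.

Lemma pc1_central x z n : Z x -> pc x z n.+1 1 = n.+2%:R *: mul (x ^^ n.+1) z.
Proof.
move=> zx; elim: n => [|n IH].
  by rewrite /= (zx z) scaler_nat mulr2n.
rewrite pcS IH pc_0 (mulZr HB) (mulA HB) -apowS -(Zapow HB n.+2 zx z).
by rewrite -[n.+3]addn1 natrD [in RHS]scalerDl scale1r.
Qed.

Lemma pc1_nil x z n M : x ^^ M.+2 = 0 ->
  mul (x ^^ M.+1) (pc x z n.+1 1) = mul (mul (x ^^ M.+1) z) (x ^^ n.+1).
Proof.
move=> h; rewrite pcS pc_0 (mulDr HB) (mulA HB) -(apowSr HB) h (mul0r HB) add0r.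
by rewrite (mulA HB).
Qed.

End Poly.
Section Extract.
Variables (R : realType) (V : lmodType R) (S : V -> Prop).
Hypotheses (S0 : S 0) (SD : forall a b, S a -> S b -> S (a + b))
  (SZ : forall (c : R) a, S a -> S (c *: a)).

Lemma S_sum (I : Type) (r : seq I) (P : pred I) (F : I -> V) :
  (forall i, P i -> S (F i)) -> S (\sum_(i <- r | P i) F i).
Proof. by move=> h; apply: big_ind. Qed.

Lemma coef_extract (n : nat) (c : nat -> V) (tt : nat -> R) :
  (forall i j, (i < n.+1)%N -> (j < n.+1)%N -> tt i = tt j -> i = j) ->
  (forall i, (i < n.+1)%N -> S (\sum_(j < n.+1) tt i ^+ j *: c j)) ->
  forall j, (j < n.+1)%N -> S (c j).
Proof.
move=> tinj H j hj.
pose M : 'M[R]_n.+1 := \matrix_(i, l) tt i ^+ l.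
have uM : M \in unitmx.
  have -> : M = (Vandermonde n.+1 (\row_l tt l))^T.
    by apply/matrixP => i l; rewrite !mxE.
  rewrite unitmxE det_tr det_Vandermonde unitfE.
  apply/prodf_neq0 => i _; apply/prodf_neq0 => l il.
  rewrite !mxE subr_eq0; apply/eqP => /tinj h.
  by move: il; rewrite h ?ltnn.
pose W := invmx M.
pose j0 : 'I_n.+1 := Ordinal hj.
have -> : c j = \sum_(i < n.+1) W j0 i *: \sum_(l < n.+1) tt i ^+ l *: c l.
  rewrite (eq_bigr (fun i => \sum_(l < n.+1) (W j0 i * tt i ^+ l) *: c l));
    last by move=> i _; rewrite scaler_sumr; apply: eq_bigr => l _; rewrite scalerA.
  rewrite exchange_big /=.
  rewrite (eq_bigr (fun l => (W *m M) j0 l *: c l)); last first.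
    by move=> l _; rewrite mxE scaler_suml; apply: eq_bigr => i _; rewrite mxE.
  rewrite mulVmx // (bigD1 j0) //= big1 ?addr0; first by rewrite mxE eqxx scale1r.
  by move=> l /negPf hl; rewrite mxE eq_sym hl scale0r.
apply: S_sum => i _; apply: SZ; exact: H.
Qed.

End Extract.
Section Endgame.
Variables (R : realType) (B : completeNormedModType R) (mul : B -> B -> B).
Hypothesis HB : banach_algebra_mul mul.
Hypothesis Hp : prime_alg mul.
Local Notation "x ^^ n" := (apow mul x n) (at level 30).
Local Notation Z := (alg_center mul).
Local Notation pc := (pc mul).

Lemma central_regular a w : Z a -> Z w -> mul a w = 0 -> a = 0 \/ w = 0.
Proof.
move=> za zw h; apply: Hp => b.
by rewrite -(mulA HB) -(zw b) (mulA HB) h (mul0r HB).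
Qed.

Lemma central_pow_neq0 a n : Z a -> a != 0 -> a ^^ n.+1 != 0.
Proof.
move=> za an0; elim: n => [//|n IH]; rewrite apowS.
apply/eqP => /(central_regular za (Zapow HB _ za)) [] /eqP; by [rewrite (negPf an0)|rewrite (negPf IH)].
Qed.

Lemma comm_of_central_mul d : Z d -> d != 0 -> (forall r, Z (mul d r)) ->
  forall x y, mul x y = mul y x.
Proof.
move=> zd dn0 h x y.
have e1 : mul d (mul x y) = mul d (mul y x).
  by rewrite (mulA HB) (h x y) (mulA HB) -(zd y) -(mulA HB).
have [|d0|] := @Hp d (mul x y - mul y x).
- move=> b; rewrite (zd b) -(mulA HB) (mulBr HB) e1 subrr (mulr0 HB) //.
- by move: dn0; rewrite d0 eqxx.
- by move/eqP; rewrite subr_eq0 => /eqP.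
Qed.

Lemma nil_case N : (forall x, x ^^ N.+1 = 0) -> forall x : B, x = 0.
Proof.
elim: N => [//|M IH] hM; apply: IH => x.
suff hz : forall z, mul (mul (x ^^ M.+1) z) (x ^^ M.+1) = 0 by case: (@Hp _ _ hz).
move=> z.
have tinj : forall i j, (i < M.+3)%N -> (j < M.+3)%N -> (i%:R : R) = j%:R -> i = j.
  by move=> i j _ _ /eqP; rewrite eqr_nat => /eqP.
have := @coef_extract R B (fun v => v = 0) erefl _ _ M.+2 (pc x z M.+1) (fun i => i%:R) tinj.
move=> /(_ _ _ _ 1%N isT) => h.
rewrite -(pc1_nil HB z M (hM x)) h ?(mulr0 HB) //.
- by move=> a b -> ->; rewrite addr0.
- by move=> c a ->; rewrite scaler0.
- by move=> i _; rewrite -(pc_expand HB).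
Qed.

Lemma central_powers_case m : (forall x, Z (x ^^ m.+2)) -> (exists u, u ^^ m.+2 != 0) ->
  forall x y, mul x y = mul y x.
Proof.
move=> hZ [u hu]; set a := u ^^ m.+2.
have za : Z a by apply: hZ.
apply: (@comm_of_central_mul (a ^^ m.+1)).
- exact: Zapow.
- exact: central_pow_neq0.
move=> r.
have tinj : forall i j, (i < m.+3)%N -> (j < m.+3)%N -> (i%:R : R) = j%:R -> i = j.
  by move=> i j _ _ /eqP; rewrite eqr_nat => /eqP.
have := @coef_extract R B Z (Z0 HB) (ZD HB) (ZZ HB) m.+2 (pc a r m.+1) (fun i => i%:R) tinj.
move=> /(_ _ 1%N isT); rewrite pc1_central // => h.
have -> : mul (a ^^ m.+1) r = (m.+2%:R)^-1 *: (m.+2%:R *: mul (a ^^ m.+1) r).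
  by rewrite scalerA mulVf ?scale1r // pnatr_eq0.
apply: ZZ => //; apply: h => i _; rewrite -(pc_expand HB); exact: (hZ (a + i%:R *: r)).
Qed.

Lemma endgame k : (0 < k)%N -> (forall u v, Z (mul (u ^^ k) (v ^^ k))) ->
  forall x y, mul x y = mul y x.
Proof.
case: k => // k _ h.
have hZ : forall u, Z (u ^^ (k + k).+2).
  move=> u; have -> : (k + k).+2 = (k.+1 + k.+1)%N by rewrite addSn addnS.
  by rewrite (apowD HB) //.
have [[u hu]|hn] := pselect (exists u, u ^^ (k + k).+2 != 0).
  by apply: (central_powers_case hZ); exists u.
have h0 : forall u, u ^^ (k + k).+2 = 0.
  by move=> u; apply/eqP; apply: contra_notT hn => hu; exists u.
by move=> x y; rewrite (nil_case h0 x) (nil_case h0 y).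
Qed.

End Endgame.
Definition Gfun {B : zmodType} (mul : B -> B -> B) (f : B -> B) (p q : nat) (x y : B) : B :=
  f (jordan_prod mul (apow mul x p) (apow mul y q))
  - alg_commutator mul (apow mul x p) (apow mul y q).

Lemma zt1 (V : zmodType) (F C : V) : C + C = (F - - C) - (F - C).
Proof. by rewrite opprK opprB [C - F]addrC addrACA subrr add0r. Qed.
Lemma zt2 (V : zmodType) (F C : V) : F + F = (F - - C) + (F - C).
Proof. by rewrite opprK addrACA subrr addr0. Qed.
Lemma zt3 (V : zmodType) (a b : V) : a + a = (a + b) + (a - b).
Proof. by rewrite addrACA subrr addr0. Qed.

Section GtoPow.
Variables (R : realType) (B : completeNormedModType R) (mul : B -> B -> B) (f : B -> B).
Hypothesis HB : banach_algebra_mul mul.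
Hypothesis Hf : alg_automorphism mul f.
Local Notation "x ^^ n" := (apow mul x n) (at level 30).
Local Notation Z := (alg_center mul).

Lemma Zf_inv w : Z (f w) -> Z w.
Proof.
case: Hf => /bij_inj finj _ fmul zw x; apply: finj.
by rewrite !fmul zw.
Qed.

Lemma half_eq (v : B) : v = 2^-1 *: (v + v).
Proof.
by rewrite scalerDr -scalerDl -[2^-1]mul1r -splitr scale1r.
Qed.

Lemma G_to_powers p q : (0 < p)%N -> (0 < q)%N ->
  (forall x y, Z (Gfun mul f p q x y)) ->
  forall u v, Z (mul (u ^^ (p * q)) (v ^^ (p * q))).
Proof.
move=> p0 q0 hG u v.
have h1 := hG (u ^^ q) (v ^^ p).
have h2 := hG (v ^^ q) (u ^^ p).
rewrite /Gfun !(apowM HB) // [(q * p)%N]mulnC /jordan_prod /alg_commutator in h1 h2.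
set a := u ^^ (p * q) in h1 h2 *; set b := v ^^ (p * q) in h1 h2 *.
rewrite [mul b a + mul a b]addrC in h2.
set F := f _ in h1 h2; set C := mul a b - mul b a in h1.
have eC : mul b a - mul a b = - C by rewrite /C opprB.
rewrite eC in h2.
have zC : Z C.
  rewrite (half_eq C); apply: ZZ => //.
  have -> : C + C = (F - - C) - (F - C).
    exact: zt1.
  exact: ZB.
have zF : Z F.
  rewrite (half_eq F); apply: ZZ => //.
  have -> : F + F = (F - - C) + (F - C).
    exact: zt2.
  exact: ZD.
have zS : Z (mul a b + mul b a) by apply: Zf_inv.
rewrite (half_eq (mul a b)); apply: ZZ => //.
have -> : mul a b + mul a b = (mul a b + mul b a) + C by apply: zt3.
exact: ZD.
Qed.

End GtoPow.
Section Glob.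
Variables (R : realType) (B : completeNormedModType R) (mul : B -> B -> B).
Hypothesis HB : banach_algebra_mul mul.
Local Notation "x ^^ n" := (apow mul x n) (at level 30).
Local Notation Z := (alg_center mul).
Local Notation pc := (pc mul).

Lemma add_natscale (g : B -> B) (gD : forall a b, g (a + b) = g a + g b) n v :
  g (n%:R *: v) = n%:R *: g v.
Proof.
have g0 : g 0 = 0.
  by apply: (addrI (g 0)); rewrite -gD !addr0.
elim: n => [|n IH]; first by rewrite !scale0r.
by rewrite -natr1 !scalerDl !scale1r gD IH.
Qed.

Lemma add_invscale (g : B -> B) (gD : forall a b, g (a + b) = g a + g b) N v :
  (0 < N)%N -> g ((N%:R)^-1 *: v) = (N%:R)^-1 *: g v.
Proof.
move=> N0; have NR : (N%:R : R) != 0 by rewrite pnatr_eq0 -lt0n.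
have hv : v = N%:R *: ((N%:R)^-1 *: v) by rewrite scalerA mulfV // scale1r.
by rewrite {2}hv add_natscale // scalerA mulVf // scale1r.
Qed.

Lemma globalize (g : B -> B) (n : nat) (y0 : B) (e : R) : 0 < e ->
  (forall a b, g (a + b) = g a + g b) ->
  (forall y, `|y - y0| < e -> Z (g (y ^^ n.+1))) ->
  forall w, Z (g (w ^^ n.+1)).
Proof.
move=> e0 gD hy w.
have g0 : g 0 = 0.
  by apply: (addrI (g 0)); rewrite -gD !addr0.
pose K := (Num.truncn (`|w| / e)).+1.
have hK : `|w| < K%:R * e.
  by rewrite -ltr_pdivrMr // truncnS_gt.
pose tt i := ((i + K)%:R : R)^-1.
have Kpos : (0 < K)%N by [].
have tinj : forall i j, (i < n.+2)%N -> (j < n.+2)%N -> tt i = tt j -> i = j.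
  move=> i j _ _ /invr_inj /eqP; rewrite eqr_nat eqn_add2r => /eqP //.
have := @coef_extract R B Z (Z0 HB) (ZD HB) (ZZ HB) n.+1
  (fun j => g (pc y0 w n j)) tt tinj.
move=> /(_ _ n.+1 (ltnSn _)); rewrite pc_top //; apply => i _.
have -> : \sum_(j < n.+2) tt i ^+ j *: g (pc y0 w n j) =
          g (\sum_(j < n.+2) tt i ^+ j *: pc y0 w n j).
  rewrite (big_morph g gD g0); apply: eq_bigr => j _.
  rewrite /tt exprVn -natrX add_invscale // expn_gt0 addn_gt0 Kpos orbT //.
rewrite -(pc_expand HB); apply: hy.
rewrite addrAC subrr add0r normrZ.
have tp : 0 < (i + K)%:R :> R by rewrite ltr0n addn_gt0 Kpos orbT.
rewrite /tt ger0_norm ?invr_ge0 ?ltW // mulrC ltr_pdivrMr //.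
apply: (lt_le_trans hK); by rewrite [X in _ <= X]mulrC -subr_ge0 -mulrBl mulr_ge0 ?(ltW e0) // subr_ge0 ler_nat leq_addl.
Qed.

End Glob.
From mathcomp Require Import lra.
Lemma zt4 (V : zmodType) (x y z : V) : x - y = (z - y) + (x - z).
Proof. by rewrite [RHS]addrC addrA subrK. Qed.

Section Cont.
Variables (R : realType) (B : completeNormedModType R) (mul : B -> B -> B).
Hypothesis HB : banach_algebra_mul mul.
Local Notation "x ^^ n" := (apow mul x n) (at level 30).
Local Notation Z := (alg_center mul).

Lemma mul_cont (T : topologicalType) (g h : T -> B) :
  continuous g -> continuous h -> continuous (fun t => mul (g t) (h t)).
Proof.
move=> cg ch t0; apply/cvgrPdist_lt => e e0.
move/cvgrPdist_lt : (cg t0) => Hg; move/cvgrPdist_lt : (ch t0) => Hh.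
set a := `|g t0|; set b := `|h t0|.
have a0 : 0 <= a by apply: normr_ge0.
have b0 : 0 <= b by apply: normr_ge0.
set d1 := e / 2 / (b + 1).
set c := e / 2 / (a + 1).
have d1p : 0 < d1 by rewrite /d1 !divr_gt0 // ltr_wpDl.
have cp : 0 < c by rewrite /c !divr_gt0 // ltr_wpDl.
have d2p : 0 < Num.min 1 c by rewrite lt_min ltr01 cp.
have ed1 : d1 * (b + 1) = e / 2 by rewrite /d1 mulfVK // gt_eqF // ltr_wpDl.
have ec : c * (a + 1) = e / 2 by rewrite /c mulfVK // gt_eqF // ltr_wpDl.
near=> t.
have H1 : `|g t0 - g t| < d1 by near: t; apply: Hg.
have H2 : `|h t0 - h t| < Num.min 1 c by near: t; apply: Hh.
move: H2; rewrite lt_min => /andP[H21 H22].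
have -> : mul (g t0) (h t0) - mul (g t) (h t) =
  mul (g t0 - g t) (h t) + mul (g t0) (h t0 - h t).
  by rewrite (mulBl HB) (mulBr HB) (zt4 _ _ (mul (g t0) (h t))).
have N1 := mul_norm HB (g t0 - g t) (h t).
have N2 := mul_norm HB (g t0) (h t0 - h t).
have N3 : `|h t| <= b + `|h t0 - h t|.
  have e1 : h t = h t0 - (h t0 - h t) by rewrite opprB addrCA subrr addr0.
  by rewrite [X in `|X| <= _]e1; apply: (le_trans (ler_normB _ _)).
have X0 : 0 <= `|g t0 - g t| by apply: normr_ge0.
have Y0 : 0 <= `|h t0 - h t| by apply: normr_ge0.
have Ht0 : 0 <= `|h t| by apply: normr_ge0.
apply: (le_lt_trans (ler_normD _ _)).
rewrite -/a in N2.
nra.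
Unshelve. all: by end_near.
Qed.

End Cont.
Section Cont2.
Variables (R : realType) (B : completeNormedModType R) (mul : B -> B -> B).
Hypothesis HB : banach_algebra_mul mul.
Local Notation "x ^^ n" := (apow mul x n) (at level 30).
Local Notation Z := (alg_center mul).

Lemma apow_cont (T : topologicalType) (g : T -> B) n :
  continuous g -> continuous (fun t => g t ^^ n).
Proof.
move=> cg; case: n => [//|n]; elim: n => [//|n IH].
exact: (mul_cont HB cg IH).
Qed.

Lemma closed_Z (T : topologicalType) (phi : T -> B) :
  continuous phi -> closed [set t | Z (phi t)].
Proof.
move=> cphi.
have -> : [set t | Z (phi t)] = \bigcap_(s in [set: B])
   ((fun t => `|mul (phi t) s - mul s (phi t)|) @^-1` [set 0]).
  apply/seteqP; split => t /=.
    by move=> zt s _ /=; rewrite zt subrr normr0.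
  move=> h s; have /= := h s I.
  by move/eqP; rewrite normr_eq0 subr_eq0 => /eqP.
apply: closed_bigI => s _; apply: preimage_closed; last exact: closed_eq.
move=> t _; apply: (@continuous_comp _ _ _ (fun t => mul (phi t) s - mul s (phi t)) (@Num.Def.normr _ B)); last exact: norm_continuous.
apply: (@continuousB _ _ _ (fun t => mul (phi t) s) (fun t => mul s (phi t))).
  by apply: (mul_cont HB cphi); exact: cst_continuous.
by apply: (mul_cont HB _ cphi); exact: cst_continuous.
Qed.

End Cont2.
Section BaireC.
Variables (R : realType) (B : completeNormedModType R).

Lemma open_ball_in (O : set B) y : open O -> O y ->
  exists2 e : R, 0 < e & forall x, `|x - y| < e -> O x.
Proof.
move=> oO Oy.
have : nbhs y O by apply: open_nbhs_nbhs; split.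
move=> /nbhs_ballP [e e0 he]; exists e => // x hx; apply: he.
by rewrite -ball_normE /= distrC.
Qed.

Lemma baire_cover (O : set B) (F : nat -> nat -> set B) :
  open O -> O !=set0 -> (forall p q, closed (F p q)) ->
  (forall x, O x -> exists p q, F p q x) ->
  exists p q (x0 : B) (e : R), 0 < e /\ (forall x, `|x - x0| < e -> F p q x).
Proof.
move=> oO; case=> z0 hz0; move=> cF hcov.
pose Fn n : set B := if @unpickle (prod nat nat) n is Some pq then F pq.1 pq.2 else set0.
have [[n [x0 [e [e0 he]]]]|H] :=
  pselect (exists n x0 (e : R), 0 < e /\ (forall x, `|x - x0| < e -> Fn n x)).
  move: he; rewrite /Fn; case: (unpickle n) => [[p q]|] he.
    by exists p, q, x0, e.
  by exfalso; apply: (he x0); rewrite subrr normr0.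
pose G n := ~` Fn n `|` (~` O)°.
have oG : forall n, open (G n).
  move=> n; apply: openU; last exact: open_interior.
  rewrite openC /Fn; case: (unpickle n) => [[p q]|]; first exact: cF.
  exact: closed0.
have dG : forall n, dense (G n).
  move=> n D [d Dd] oD.
  have [[y [Dy Oy]]|DO] := pselect (D `&` O !=set0).
    have [e e0 he] := open_ball_in (openI oD oO) (conj Dy Oy).
    have [x hx] : exists x, ~ (`|x - y| < e -> Fn n x).
      apply/existsNP => hall; apply: H; exists n, y, e; split => //.
    have [hxe|hxe] := pselect (`|x - y| < e); last first.
      by exfalso; apply: hx => h; exfalso; exact: hxe h.
    have hFx : ~ Fn n x by move=> hF; apply: hx => _; exact: hF.
    by exists x; split; [case: (he x hxe)|left].
  exists d; split => //; right.
  have nD : nbhs d D by apply: open_nbhs_nbhs; split.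
  apply: (filterS _ nD) => z Dz Oz; apply: DO; by exists z.
have := @Baire R B G (fun n => conj (oG n) (dG n)) O (ex_intro _ z0 hz0) oO.
move=> [x [Ox Gx]].
have [p [q hx]] := hcov x Ox.
have := Gx (pickle (p, q)) I; rewrite /G /Fn pickleK /=.
case => [//|/interior_subset]; by [].
Qed.

End BaireC.
Section Main.
Variables (R : realType) (B : completeNormedModType R) (mul : B -> B -> B) (f : B -> B).
Hypothesis HB : banach_algebra_mul mul.
Hypothesis Hf : alg_automorphism mul f.
Hypothesis cf : continuous f.
Local Notation "x ^^ n" := (apow mul x n) (at level 30).
Local Notation Z := (alg_center mul).

Lemma fD a b : f (a + b) = f a + f b.
Proof. by case: Hf. Qed.

Lemma Gcont (T : topologicalType) (a b : T -> B) : continuous a -> continuous b ->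
  continuous (fun t => f (jordan_prod mul (a t) (b t)) - alg_commutator mul (a t) (b t)).
Proof.
move=> ca cb t.
apply: (@continuousB _ _ _ (fun t => f (jordan_prod mul (a t) (b t)))
                          (fun t => alg_commutator mul (a t) (b t))).
  apply: (@continuous_comp _ _ _ (fun t => jordan_prod mul (a t) (b t)) f); last exact: cf.
  apply: (@continuousD _ _ _ (fun t => mul (a t) (b t)) (fun t => mul (b t) (a t))).
    exact: (mul_cont HB ca cb).
  exact: (mul_cont HB cb ca).
apply: (@continuousB _ _ _ (fun t => mul (a t) (b t)) (fun t => mul (b t) (a t))).
  exact: (mul_cont HB ca cb).
exact: (mul_cont HB cb ca).
Qed.

Lemma zt5 (V : zmodType) (x y u v : V) : (x + y) - (u + v) = (x - u) + (y - v).
Proof. by rewrite opprD addrACA. Qed.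

Lemma gadd_r A a b :
  f (jordan_prod mul A (a + b)) - alg_commutator mul A (a + b) =
  (f (jordan_prod mul A a) - alg_commutator mul A a) +
  (f (jordan_prod mul A b) - alg_commutator mul A b).
Proof.
rewrite /jordan_prod /alg_commutator (mulDr HB) (mulDl HB) addrACA fD.
by rewrite (zt5 (mul A a)) zt5.
Qed.

Lemma gadd_l A a b :
  f (jordan_prod mul (a + b) A) - alg_commutator mul (a + b) A =
  (f (jordan_prod mul a A) - alg_commutator mul a A) +
  (f (jordan_prod mul b A) - alg_commutator mul b A).
Proof.
rewrite /jordan_prod /alg_commutator (mulDr HB) (mulDl HB) addrACA fD.
by rewrite (zt5 (mul a A)) zt5.
Qed.

End Main.
Theorem theorem2p4 (R : realType) (B : completeNormedModType R)
  (mul : B -> B -> B) (H1 H2 : set B) (f : B -> B) :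
  banach_algebra_mul mul ->
  prime_alg mul ->
  open H1 -> H1 !=set0 ->
  open H2 -> H2 !=set0 ->
  alg_automorphism mul f ->
  continuous f ->
  (forall x y, H1 x -> H2 y ->
     exists p q : nat, (0 < p)%N /\ (0 < q)%N /\
       alg_center mul ((f (jordan_prod mul (apow mul x p) (apow mul y q))
                   - alg_commutator mul (apow mul x p) (apow mul y q)) : B)) ->
  forall x y : B, mul x y = mul y x.
Proof.
move=> HB Hp oH1 nH1 oH2 nH2 Hf cf hyp.
have cid : continuous (@id B) by move=> t; exact: cvg_id.
have stepA : forall x, H1 x -> exists p q, forall w,
    alg_center mul (Gfun mul f p.+1 q.+1 x w).
  move=> x hx.
  have hcov : forall y, H2 y -> exists p q,
      [set y | alg_center mul (Gfun mul f p.+1 q.+1 x y)] y.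
    move=> y hy; have [p [q [hp [hq hz]]]] := hyp x y hx hy.
    case: p hp hz => // p _; case: q hq => // q _ hz.
    by exists p, q.
  have [p [q [y0 [e [e0 he]]]]] := baire_cover oH2 nH2
    (fun p q => closed_Z HB (Gcont HB cf (@cst_continuous _ _ (apow mul x p.+1))
                   (apow_cont HB (n := q.+1) cid))) hcov.
  exists p, q => w.
  exact: (globalize HB (g := fun v => f (jordan_prod mul (apow mul x p.+1) v)
       - alg_commutator mul (apow mul x p.+1) v) e0 (gadd_r HB Hf _) he).
have hcovB : forall x, H1 x -> exists p q,
    [set x | forall w, alg_center mul (Gfun mul f p.+1 q.+1 x w)] x.
  by move=> x hx; have [p [q h]] := stepA x hx; exists p, q.
have cB : forall p q, closed [set x | forall w, alg_center mul (Gfun mul f p.+1 q.+1 x w)].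
  move=> p q.
  have -> : [set x | forall w, alg_center mul (Gfun mul f p.+1 q.+1 x w)] =
     \bigcap_(w in [set: B]) [set x | alg_center mul (Gfun mul f p.+1 q.+1 x w)].
    apply/seteqP; split => x /=.
      by move=> h w _; apply: h.
    by move=> h w; apply: h.
  apply: closed_bigI => w _.
  exact: (closed_Z HB (Gcont HB cf (apow_cont HB (n := p.+1) cid)
             (@cst_continuous _ _ (apow mul w q.+1)))).
have [p [q [x0 [e [e0 he]]]]] := baire_cover oH1 nH1 cB hcovB.
have hall : forall z w, alg_center mul (Gfun mul f p.+1 q.+1 z w).
  move=> z w.
  apply: (globalize HB (y0 := x0) (g := fun v => f (jordan_prod mul v (apow mul w q.+1))
       - alg_commutator mul v (apow mul w q.+1)) e0 (gadd_l HB Hf _)) => y hy.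
  exact: (he y hy w).
apply: (endgame HB Hp (k := (p.+1 * q.+1)%N)); first by rewrite muln_gt0.
exact: (G_to_powers HB Hf (p := p.+1) (q := q.+1)).
Qed.
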